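(* Let $A\in\mathbb{R}^{m\times n}$ be semi-monotone (i.e. $A^{\dagger}\geq 0$). Let $A=M-N=U-V$ be two proper regular splittings of $A$ such that $R(M+U-A)=R(A)$ and $N(M+U-A)=N(A)$. Suppose all row sums of $U^{\dagger}$ and of $M^{\dagger}$ are positive. Then, with $H=U^{\dagger}VM^{\dagger}N$, $$\rho(H)\leq \min\{\rho(U^{\dagger}V),\rho(M^{\dagger}N)\}<1.$$
   Context: All matrices are real. $X^{\dagger}$ denotes the Moore–Penrose inverse of $X$, and $\rho(\cdot)$ the spectral radius. For a matrix $X$, $X\geq 0$ means that all entries of $X$ are nonnegative and at least one entry is positive; $X\geq Y$ means $X-Y\geq 0$. $R(X)$ and $N(X)$ denote range and null space. A splitting $A=U-V$ is proper if $R(U)=R(A)$ and $N(U)=N(A)$; it is a proper regular splitting if it is proper, $U^{\dagger}\geq 0$ and $V\geq 0$. *)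

(* Defs.v *)
From HB Require Import structures.
From mathcomp Require Import all_boot all_order all_algebra.
From mathcomp Require Import complex.
From mathcomp Require Import reals.
Set Implicit Arguments. Unset Strict Implicit. Unset Printing Implicit Defensive.
Import Order.TTheory GRing.Theory Num.Theory.
Local Open Scope ring_scope.

Section Defs.
Variable R : realType.

Definition is_MPinv m n (A : 'M[R]_(m, n)) (X : 'M[R]_(n, m)) : Prop :=
  [/\ A *m X *m A = A, X *m A *m X = X, (A *m X)^T = A *m X & (X *m A)^T = X *m A].

Definition mx_ge0 m n (X : 'M[R]_(m, n)) : Prop :=
  (forall i j, 0 <= X i j) /\ (exists i j, 0 < X i j).

Definition in_range m n (X : 'M[R]_(m, n)) (y : 'cV[R]_m) : Prop :=
  exists x : 'cV[R]_n, y = X *m x.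
Definition in_null m n (X : 'M[R]_(m, n)) (x : 'cV[R]_n) : Prop :=
  X *m x = 0.

Definition same_range m n (X Y : 'M[R]_(m, n)) : Prop :=
  forall y, in_range X y <-> in_range Y y.
Definition same_null m n (X Y : 'M[R]_(m, n)) : Prop :=
  forall x, in_null X x <-> in_null Y x.

Definition proper_splitting m n (A U V : 'M[R]_(m, n)) : Prop :=
  [/\ A = U - V, same_range U A & same_null U A].

Definition proper_regular_splitting m n (A U V : 'M[R]_(m, n))
  (Udag : 'M[R]_(n, m)) : Prop :=
  [/\ proper_splitting A U V, is_MPinv U Udag, mx_ge0 Udag & mx_ge0 V].

Definition spectrum n (A : 'M[R]_n) : seq R[i] :=
  sval (closed_field_poly_normal (char_poly (map_mx (real_complex R) A))).

Definition spectral_radius n (A : 'M[R]_n) : R :=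
  \big[Num.max/0]_(z <- spectrum A) Normc.normc z.

End Defs.

(* Main.v *)
Require Import Defs.
From HB Require Import structures.
From mathcomp Require Import all_boot all_order all_algebra.
From mathcomp Require Import complex.
From mathcomp Require Import reals.
From mathcomp Require Import polyrcf lra ring.
From mathcomp Require Import boolp classical_sets.
Import Order.TTheory GRing.Theory Num.Theory.
Local Open Scope ring_scope.
Set Implicit Arguments. Unset Strict Implicit. Unset Printing Implicit Defensive.


Section Big.
Variables (R : realType) (T : Type) (f : T -> R).

Lemma bmax_ge0 (s : seq T) : 0 <= \big[Num.max/0]_(z <- s) f z.
Proof. elim: s => [|x s IH]; rewrite ?big_nil ?big_cons // le_max IH orbT //. Qed.
End Big.

Section Big2.
Variables (R : realType) (T : eqType) (f : T -> R).
Lemma le_bmax (s : seq T) x : x \in s -> f x <= \big[Num.max/0]_(z <- s) f z.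
Proof.
elim: s => [//|y s IH]; rewrite inE big_cons => /orP[/eqP->|/IH h].
  by rewrite le_max lexx.
by rewrite le_max h orbT.
Qed.
Lemma bmax_le (s : seq T) a : 0 <= a -> (forall x, x \in s -> f x <= a) ->
  \big[Num.max/0]_(z <- s) f z <= a.
Proof.
move=> a0; elim: s => [|y s IH] h; rewrite ?big_nil ?big_cons // ge_max h ?inE ?eqxx //.
by rewrite IH // => x xs; apply: h; rewrite inE xs orbT.
Qed.
Lemma bmax_lt (s : seq T) a : 0 < a -> (forall x, x \in s -> f x < a) ->
  \big[Num.max/0]_(z <- s) f z < a.
Proof.
move=> a0; elim: s => [|y s IH] h; rewrite ?big_nil ?big_cons // gt_max h ?inE ?eqxx //.
by rewrite IH // => x xs; apply: h; rewrite inE xs orbT.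
Qed.
End Big2.

Lemma horner_cpm (R : comNzRingType) n (A : 'M[R]_n) (a : R) :
  map_mx (horner_eval a) (char_poly_mx A) = a%:M - A.
Proof.
apply/matrixP => i j; rewrite !mxE /horner_eval.
by rewrite hornerD hornerN hornerMn hornerX hornerC.
Qed.

Lemma char_poly_horner (R : comNzRingType) n (A : 'M[R]_n) (a : R) :
  (char_poly A).[a] = \det (a%:M - A).
Proof. by rewrite -horner_cpm det_map_mx. Qed.

Section Spec.
Variable R : realType.
Local Notation C := R[i].
Definition cmx m n (X : 'M[R]_(m, n)) : 'M[C]_(m, n) := map_mx (real_complex R) X.
Definition eig n (T : 'M[R]_n) (l : C) :=
  exists2 z : 'cV[C]_n, z != 0 & cmx T *m z = l *: z.

Lemma spec_root n (T : 'M[R]_n) l :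
  (l \in spectrum T) = root (char_poly (cmx T)) l.
Proof.
rewrite /spectrum; case: closed_field_poly_normal => s /= hs.
rewrite [in RHS]hs (monicP (char_poly_monic _)) scale1r root_prod_XsubC //.
Qed.

Lemma root_eig n (T : 'M[R]_n) l :
  root (char_poly (cmx T)) l <-> eig T l.
Proof.
rewrite /root char_poly_horner -det_tr; split.
  move/det0P => [v v0 hv]; exists v^T; first by rewrite trmx_eq0.
  have h : (l%:M - cmx T) *m v^T = 0.
    by rewrite -[l%:M - _]trmxK -trmx_mul hv trmx0.
  by move: h; rewrite mulmxBl mul_scalar_mx => /eqP; rewrite subr_eq0 => /eqP.
move=> [z z0 hz]; apply/det0P; exists z^T; first by rewrite trmx_eq0.
by rewrite -trmx_mul mulmxBl mul_scalar_mx hz subrr trmx0.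
Qed.

Lemma spec_eig n (T : 'M[R]_n) l : l \in spectrum T <-> eig T l.
Proof. by rewrite spec_root; exact: root_eig. Qed.

Lemma rho_ge0 n (T : 'M[R]_n) : 0 <= spectral_radius T.
Proof. exact: bmax_ge0. Qed.

Lemma rho_ub n (T : 'M[R]_n) l : eig T l -> Normc.normc l <= spectral_radius T.
Proof. by move/spec_eig; exact: le_bmax. Qed.

Lemma rho_le n (T : 'M[R]_n) a : 0 <= a ->
  (forall l, eig T l -> Normc.normc l <= a) -> spectral_radius T <= a.
Proof. by move=> a0 h; apply: bmax_le => // x /spec_eig; apply: h. Qed.

Lemma rho_lt n (T : 'M[R]_n) a : 0 < a ->
  (forall l, eig T l -> Normc.normc l < a) -> spectral_radius T < a.
Proof. by move=> a0 h; apply: bmax_lt => // x /spec_eig; apply: h. Qed.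
End Spec.


Section UB.
Variable R : realType.
Local Notation C := R[i].
Local Notation nc := (@Normc.normc R).

Lemma normc_sum (I : Type) (r : seq I) (P : pred I) (F : I -> C) :
  nc (\sum_(i <- r | P i) F i) <= \sum_(i <- r | P i) nc (F i).
Proof.
elim/big_rec2: _ => [|i y1 y2 _ h]; first by rewrite Normc.normc0.
by apply: (le_trans (le_normcD (F i) y2)); rewrite lerD2l.
Qed.

Lemma normc_real (a : R) : nc (a%:C)%C = `|a|.
Proof. by rewrite /Normc.normc /= expr0n /= addr0 sqrtr_sqr. Qed.

Lemma normc_ge0 (z : C) : 0 <= nc z.
Proof. by case: z => a b; rewrite /Normc.normc sqrtr_ge0. Qed.

Lemma cV_neq0 n (z : 'cV[C]_n) : z != 0 -> exists i, z i 0 != 0.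
Proof.
move=> z0; apply/existsP; apply: contraR z0 => /existsPn h.
by apply/eqP/matrixP => i j; rewrite ord1 mxE; apply/eqP/negPn/h.
Qed.

Lemma eig_key n (T : 'M[R]_n) (x : 'cV[R]_n) l :
  (forall i j, 0 <= T i j) -> (forall i, 0 < x i 0) -> eig T l ->
  exists i, nc l * x i 0 <= (T *m x) i 0.
Proof.
move=> T0 x0 [z z0 hz]; have [j zj] := cV_neq0 z0.
pose F k := nc (z k 0) / x k 0.
have [i _ Fi] := @arg_maxP _ _ _ j predT F isT.
set c := F i in Fi.
have Fj : 0 < F j.
  rewrite divr_gt0 // lt_def normc_ge0 andbT.
  by apply: contra zj => /eqP /Normc.eq0_normc ->.
have c0 : 0 < c by exact: lt_le_trans Fj (Fi _ isT).
have hk : forall k, nc (z k 0) <= c * x k 0.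
  by move=> k; have := Fi k isT; rewrite /F /= ler_pdivrMr.
have hi : nc (z i 0) = c * x i 0 by rewrite /c /F divfK // gt_eqF.
exists i.
have e : (cmx T *m z) i 0 = (l *: z) i 0 by rewrite hz.
rewrite [RHS]mxE in e.
have : nc l * nc (z i 0) <= c * (T *m x) i 0.
  rewrite -Normc.normcM -e [(T *m x) i 0]mxE mulr_sumr [(cmx T *m z) i 0]mxE.
  have hh := normc_sum (index_enum 'I_n) xpredT (fun j0 => cmx T i j0 * z j0 0).
  refine (le_trans hh _).
  apply: ler_sum => k _.
  rewrite mxE Normc.normcM normc_real ger0_norm // mulrCA.
  by apply: ler_wpM2l => //; rewrite mulrC hk.
by rewrite hi mulrCA ler_pM2l.
Qed.

Lemma ub_eig n (T : 'M[R]_n) (x : 'cV[R]_n) a l :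
  (forall i j, 0 <= T i j) -> (forall i, 0 < x i 0) ->
  (forall i, (T *m x) i 0 <= a * x i 0) -> eig T l -> nc l <= a.
Proof.
move=> T0 x0 h e; have [i hi] := eig_key T0 x0 e.
by rewrite -(ler_pM2r (x0 i)); apply: le_trans hi (h i).
Qed.

Lemma ub_eig_lt n (T : 'M[R]_n) (x : 'cV[R]_n) a l :
  (forall i j, 0 <= T i j) -> (forall i, 0 < x i 0) ->
  (forall i, (T *m x) i 0 < a * x i 0) -> eig T l -> nc l < a.
Proof.
move=> T0 x0 h e; have [i hi] := eig_key T0 x0 e.
by rewrite -(ltr_pM2r (x0 i)); apply: le_lt_trans hi (h i).
Qed.
End UB.


Section Core.
Variable R : realType.
Local Notation C := R[i].
Local Notation nc := (@Normc.normc R).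

Definition nnm m n (X : 'M[R]_(m, n)) := forall i j, 0 <= X i j.
Definition good n (L : 'M[R]_n) s := exists w : 'cV[R]_n,
  (forall i, 0 < w i 0) /\ (forall i, (L *m w) i 0 < s * w i 0).

Lemma nnm_mul m n p (X : 'M[R]_(m, n)) (Y : 'M[R]_(n, p)) :
  nnm X -> nnm Y -> nnm (X *m Y).
Proof. by move=> hX hY i j; rewrite mxE sumr_ge0 // => k _; rewrite mulr_ge0. Qed.

Lemma subM_entry n (L : 'M[R]_n) s (y : 'cV[R]_n) i :
  ((s%:M - L) *m y) i 0 = s * y i 0 - (L *m y) i 0.
Proof. by rewrite mulmxBl mul_scalar_mx !mxE. Qed.

Lemma real_eig n (L : 'M[R]_n) s : \det (s%:M - L) = 0 -> eig L (s%:C)%C.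
Proof.
move=> /eqP; rewrite -det_tr => /det0P [v v0 hv].
have h : (s%:M - L) *m v^T = 0 by rewrite -[s%:M - _]trmxK -trmx_mul hv trmx0.
exists (cmx v^T); first by rewrite /cmx map_mx_eq0 trmx_eq0.
move: h; rewrite mulmxBl mul_scalar_mx => /eqP; rewrite subr_eq0 => /eqP h.
by rewrite /cmx -map_mxM -h map_mxZ.
Qed.

Lemma good_pos n (L : 'M[R]_n) s : nnm L -> good L s -> (0 < n)%N -> 0 < s.
Proof.
case: n L => // n L L0 [w [w0 hw]] _.
have h0 : 0 < s * w ord0 0.
  apply: le_lt_trans (hw ord0).
  by rewrite mxE sumr_ge0 // => k _; rewrite mulr_ge0 // ltW.
by rewrite pmulr_lgt0 in h0.
Qed.

Lemma zmon n (L : 'M[R]_n) s (y : 'cV[R]_n) : nnm L -> good L s ->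
  (forall i, 0 <= ((s%:M - L) *m y) i 0) -> forall i, 0 <= y i 0.
Proof.
move=> L0 [w [w0 hw]] hb i0; rewrite leNgt; apply/negP => yneg.
pose F k := y k 0 / w k 0.
have [i _ Fi] := @arg_minP _ _ _ i0 predT F isT.
set c := F i in Fi.
have c0 : c < 0.
  apply: le_lt_trans (Fi i0 isT) _; rewrite /F /= pmulr_llt0 ?invr_gt0 //.
have hk : forall k, c * w k 0 <= y k 0.
  by move=> k; have := Fi k isT; rewrite /F /= ler_pdivlMr.
have hi : y i 0 = c * w i 0 by rewrite /c /F /= divfK // gt_eqF.
have := hb i; rewrite subM_entry subr_ge0 => h1.
have h2 : c * (L *m w) i 0 <= (L *m y) i 0.
  rewrite !mxE mulr_sumr; apply: ler_sum => k _.
  by rewrite mulrCA ler_wpM2l.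
have h3 : c * (s * w i 0) < c * (L *m w) i 0 by rewrite ltr_nM2l.
have := lt_le_trans h3 (le_trans h2 h1).
by rewrite hi mulrCA ltxx.
Qed.

Lemma lemmaP n (L : 'M[R]_n) s : nnm L -> good L s ->
  (s%:M - L) \in unitmx /\ nnm (invmx (s%:M - L)).
Proof.
move=> L0 g.
have un : (s%:M - L) \in unitmx.
  rewrite unitmxE unitfE; apply/eqP => d0.
  have npos : (0 < n)%N.
    by case: n L L0 g d0 => // L L0 g; rewrite det_mx00 => /eqP; rewrite oner_eq0.
  have s0 := good_pos L0 g npos.
  case: g => w [w0 hw].
  have := ub_eig_lt L0 w0 hw (real_eig d0).
  by rewrite normc_real gtr0_norm // ltxx.
split => // i j.
have := @zmon n L s (invmx (s%:M - L) *m delta_mx j 0) L0 g.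
rewrite mulmxA mulmxV // mul1mx -colE => h.
have := h _ i; rewrite mxE; apply => k; by rewrite mxE ler0n.
Qed.

Lemma good_mono n (L : 'M[R]_n) s s' : good L s -> s <= s' -> good L s'.
Proof.
move=> [w [w0 hw]] ss'; exists w; split => // i.
by apply: lt_le_trans (hw i) _; rewrite ler_wpM2r // ltW.
Qed.

Lemma good_big n (L : 'M[R]_n) : nnm L -> good L (1 + \sum_i \sum_j L i j).
Proof.
move=> L0; exists (const_mx 1); split => [i|i]; first by rewrite mxE ltr01.
have h1 : (L *m (const_mx 1 : 'cV[R]_n)) i 0 = \sum_j L i j.
  by rewrite mxE; apply: eq_bigr => k _; rewrite mxE mulr1.
have h2 : \sum_j L i j <= \sum_i0 \sum_j L i0 j.
  by rewrite [X in _ <= X](bigD1 i) //= lerDl sumr_ge0 // => k _; rewrite sumr_ge0.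
rewrite h1 mxE mulr1; lra.
Qed.

Lemma lemmaQ n (L : 'M[R]_n) s : nnm L -> 0 < s -> (s%:M - L) \in unitmx ->
  nnm (invmx (s%:M - L)) -> exists2 d, 0 < d & good L (s - d).
Proof.
move=> L0 s0 un inn.
pose w : 'cV[R]_n := invmx (s%:M - L) *m const_mx 1.
have wn : nnm w by apply: (nnm_mul inn) => k l; rewrite mxE.
have w0 : forall i, 0 <= w i 0 by move=> i; apply: wn.
have Lw0 : forall i, 0 <= (L *m w) i 0 by move=> i; apply: nnm_mul.
have hB : forall i, s * w i 0 - (L *m w) i 0 = 1.
  by move=> i; rewrite -subM_entry /w mulmxA mulmxV // mul1mx mxE.
pose S := \sum_k w k 0.
have S0 : 0 <= S by rewrite sumr_ge0.
exists (1 + S)^-1; first by rewrite invr_gt0 ltr_pwDl.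
exists w; split => i.
  have : 0 < s * w i 0 by have := hB i; have := Lw0 i; lra.
  by rewrite pmulr_rgt0.
have wS : w i 0 < 1 + S.
  have : w i 0 <= S by rewrite /S (bigD1 i) //= lerDl sumr_ge0.
  lra.
have dw : (1 + S)^-1 * w i 0 < 1.
  by rewrite mulrC ltr_pdivrMr ?mul1r // ltr_pwDl.
have h := hB i.
rewrite mulrBl; lra.
Qed.
End Core.


Section Core2.
Variable R : realType.

Lemma horner_adj n (L : 'M[R]_n) (s : R) i j :
  ((\adj (char_poly_mx L)) i j).[s] = (\adj (s%:M - L)) i j.
Proof. rewrite -(horner_cpm L s) -(map_mx_adj (horner_eval s) (char_poly_mx L)). by rewrite [RHS]mxE. Qed.

Lemma inv_entry n (B : 'M[R]_n) i j : B \in unitmx ->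
  invmx B i j * (\det B) ^+ 2 = \adj B i j * \det B.
Proof.
move=> un; have d0 : \det B != 0 by rewrite -unitfE -unitmxE.
by rewrite /invmx un mxE expr2; field.
Qed.

Lemma core n (L : 'M[R]_n) g : nnm L -> spectral_radius L < g -> good L g.
Proof.
move=> L0 hg; apply: contrapT => ng.
pose S : set R := fun s => good L s.
have lb : lbound S g.
  move=> s gs; rewrite leNgt; apply/negP => sg; apply: ng.
  exact: good_mono gs (ltW sg).
have ne : (S !=set0)%classic by exists (1 + \sum_i \sum_j L i j); exact: good_big.
have gsi : g <= inf S := lb_le_inf ne lb.
set si := inf S in gsi.
have rsi : spectral_radius L < si := lt_le_trans hg gsi.
have si0 : 0 < si := le_lt_trans (rho_ge0 L) rsi.
have above : forall y, si < y -> good L y.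
  by move=> y /(inf_lt ne) [s' gs' lt]; exact: good_mono gs' (ltW lt).
have un : (si%:M - L) \in unitmx.
  rewrite unitmxE unitfE; apply/eqP => d0.
  have := rho_ub (real_eig d0); rewrite normc_real gtr0_norm //; lra.
have inn : nnm (invmx (si%:M - L)).
  move=> i j; rewrite leNgt; apply/negP => neg.
  pose q := ((\adj (char_poly_mx L)) i j) * char_poly L.
  have qs : forall s, q.[s] = (\adj (s%:M - L)) i j * \det (s%:M - L).
    by move=> s; rewrite hornerM horner_adj char_poly_horner.
  have sq0 : forall s, (s%:M - L) \in unitmx -> 0 < (\det (s%:M - L)) ^+ 2.
    move=> s u; rewrite lt_def sqr_ge0 andbT expf_eq0 /=.
    by rewrite -unitfE -unitmxE.
  have qneg : q.[si] < 0.
    by rewrite qs -inv_entry // pmulr_llt0 // sq0.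
  have qn : 0 < - q.[si] by rewrite oppr_gt0.
  have [e e0 he] := poly_cont si q qn.
  have := he (si + e / 2%:R); rewrite addrC addKr gtr0_norm ?divr_gt0 //.
  have e2 : e / 2%:R < e by rewrite ltr_pdivrMr // ltr_pMr // ltr1n.
  move=> /(_ e2); rewrite ltr_norml => /andP[_ h2].
  have gy : good L (si + e / 2%:R) by apply: above; rewrite ltrDl divr_gt0.
  have [uy iy] := lemmaP L0 gy.
  have : 0 <= q.[si + e / 2%:R].
    by rewrite qs -inv_entry // mulr_ge0 // ltW // sq0.
  lra.
have [d d0 gd] := lemmaQ L0 si0 un inn.
have : si <= si - d by apply: ge_inf => //; exists g.
lra.
Qed.
End Core2.


Section MP.
Variable R : realType.

Lemma mx_ext m n (B C : 'M[R]_(m, n)) : (forall x : 'cV_n, B *m x = C *m x) -> B = C.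
Proof.
move=> h; apply/matrixP => i j.
have := congr1 (fun X : 'cV_m => X i 0) (h (delta_mx j 0)).
by rewrite -!colE !mxE.
Qed.

Variables (m n : nat) (A U V : 'M[R]_(m, n)) (Ad Ud : 'M[R]_(n, m)).
Hypotheses (hA : is_MPinv A Ad) (hU : is_MPinv U Ud) (ps : proper_splitting A U V).

Lemma mp_a : A *m Ad *m U = U.
Proof.
case: ps => _ rg _; case: hA => a1 _ _ _.
apply: mx_ext => x; have [y hy] : in_range A (U *m x) by apply/rg; exists x.
by rewrite -mulmxA hy !mulmxA a1.
Qed.

Lemma mp_b : A *m Ud *m U = A.
Proof.
case: ps => _ _ nl; case: hU => u1 _ _ _.
apply: mx_ext => x.
have : in_null A (x - Ud *m U *m x).
  by apply/nl; rewrite /in_null mulmxBr !mulmxA u1 subrr.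
by rewrite /in_null mulmxBr => /eqP; rewrite subr_eq0 !mulmxA => /eqP ->.
Qed.

Lemma mp_e : Ud *m U *m Ad = Ad.
Proof.
case: hA => _ a2 _ a4; case: hU => _ _ _ u4.
have eA : Ad = A^T *m Ad^T *m Ad by rewrite -trmx_mul a4 a2.
have eU : Ud *m U *m A^T = A^T by rewrite -u4 -trmx_mul mulmxA mp_b.
by rewrite [in LHS]eA !mulmxA eU -eA.
Qed.

Lemma mp_f : Ud *m A *m Ad = Ud.
Proof.
case: hA => _ _ a3 _; case: hU => _ u2 u3 _.
have eU : Ud = Ud *m Ud^T *m U^T by rewrite -mulmxA -trmx_mul u3 mulmxA u2.
have h : U^T *m (A *m Ad) = U^T by rewrite -{1}a3 -trmx_mul mp_a.
by rewrite [in LHS]eU -!mulmxA h !mulmxA -eU.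
Qed.

Lemma mp_I1 : Ud *m V *m Ad = Ad - Ud.
Proof.
case: ps => eA _ _.
have -> : V = U - A by rewrite eA opprB addrC subrK.
by rewrite mulmxBr mulmxBl mp_e mp_f.
Qed.
End MP.


Section Main.
Variable R : realType.
Local Notation nc := (@Normc.normc R).

Lemma mxsubE m n (P Q : 'M[R]_(m, n)) i j : (P - Q) i j = P i j - Q i j.
Proof. by rewrite !mxE. Qed.
Lemma mxaddE m n (P Q : 'M[R]_(m, n)) i j : (P + Q) i j = P i j + Q i j.
Proof. by rewrite !mxE. Qed.

Lemma swap_rho n (X Y : 'M[R]_n) :
  spectral_radius (X *m Y) <= spectral_radius (Y *m X).
Proof.
apply: (@rho_le _ _ (X *m Y) _ (rho_ge0 (Y *m X))) => l [z z0 hz].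
have [->|l0] := eqVneq l 0; first by rewrite Normc.normc0 rho_ge0.
apply: rho_ub; rewrite /cmx map_mxM -mulmxA in hz.
exists (cmx Y *m z).
  apply: contra z0 => /eqP w0; move: hz; rewrite /cmx w0 mulmx0 => /esym/eqP.
  by rewrite scaler_eq0 (negbTE l0).
by rewrite /cmx map_mxM -!mulmxA hz -scalemxAr.
Qed.

Lemma rowsum_pos m n (X : 'M[R]_(n, m)) (w : 'cV[R]_m) : nnm X ->
  (forall i, 0 < \sum_j X i j) -> (forall j, 0 < w j 0) ->
  forall i, 0 < (X *m w) i 0.
Proof.
move=> X0 hs w0 i.
case: (boolP [exists j, 0 < X i j]) => [/existsP [j hj] | /existsPn hn].
  rewrite mxE (bigD1 j) //=.
  have h1 : 0 < X i j * w j 0 by rewrite mulr_gt0.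
  have h2 : 0 <= \sum_(k | k != j) X i k * w k 0.
    by rewrite sumr_ge0 // => k _; rewrite mulr_ge0 // ltW.
  lra.
have : \sum_j X i j <= 0 by apply: sumr_le0 => j _; rewrite leNgt hn.
have := hs i; lra.
Qed.

Lemma ML m n (A U V M N : 'M[R]_(m, n)) (Ad Ud Md : 'M[R]_(n, m)) :
  is_MPinv A Ad -> nnm Ad -> proper_splitting A U V -> is_MPinv U Ud ->
  nnm Ud -> nnm V -> (forall i, 0 < \sum_j Ud i j) ->
  proper_splitting A M N -> is_MPinv M Md -> nnm Md -> nnm N ->
  spectral_radius (Ud *m V) < 1 /\
  spectral_radius (Ud *m V *m (Md *m N)) <= spectral_radius (Ud *m V).
Proof.
move=> hA Ad0 psU hU Ud0 V0 rs psM hM Md0 N0.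
set T1 := Ud *m V; set T2 := Md *m N.
have T10 : nnm T1 := nnm_mul Ud0 V0.
have T20 : nnm T2 := nnm_mul Md0 N0.
have I1 := mp_I1 hA hU psU.
have I2 := mp_I1 hA hM psM.
have r1 : spectral_radius T1 < 1.
  pose e : 'cV[R]_m := const_mx 1.
  have e0 : nnm e by move=> i j; rewrite mxE.
  pose z := Ad *m e; pose u := Ud *m e.
  have u0 : forall i, 0 < u i 0.
    by apply: rowsum_pos => // j; rewrite mxE ltr01.
  have Tz : T1 *m z = z - u by rewrite /z mulmxA /T1 I1 mulmxBl.
  have Tz0 : forall i, 0 <= (T1 *m z) i 0.
    by move=> i; exact: (nnm_mul T10 (nnm_mul Ad0 e0) i 0).
  have z0 : forall i, 0 < z i 0.
    by move=> i; have := Tz0 i; rewrite Tz mxsubE; have := u0 i; lra.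
  apply: (@rho_lt _ _ T1 1 ltr01) => l el; apply: (ub_eig_lt T10 z0 _ el) => i.
  by rewrite Tz mxsubE mul1r; have := u0 i; lra.
split; first exact: r1.
have key : forall t, spectral_radius T1 < t -> t < 1 ->
    spectral_radius (T1 *m T2) <= t.
  move=> t rt t1.
  have t0 : 0 < t := le_lt_trans (rho_ge0 _) rt.
  pose g := t / (1 - t).
  have g0 : 0 < g by rewrite divr_gt0 // subr_gt0.
  have hg : (1 - t) * g = t.
    by rewrite /g mulrC divfK // subr_eq0 eq_sym lt_eqF.
  pose L := V *m Ad.
  have L0 : nnm L := nnm_mul V0 Ad0.
  have rL : spectral_radius L < g.
    apply: (@rho_lt _ _ L g g0) => mu [z z0 hz].
    have [->|mu0] := eqVneq mu 0; first by rewrite Normc.normc0.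
    rewrite /cmx map_mxM in hz.
    pose y := cmx Ad *m z; pose w := cmx Ud *m z.
    have hz' : cmx V *m y = mu *: z by rewrite /y mulmxA.
    have y0 : y != 0.
      apply: contra z0 => /eqP y0'; move: hz'; rewrite y0' mulmx0 => /esym/eqP.
      by rewrite scaler_eq0 (negbTE mu0).
    have cI1 : cmx Ud *m cmx V *m cmx Ad = cmx Ad - cmx Ud.
      by rewrite /cmx -!map_mxM I1 map_mxB.
    have e1 : cmx T1 *m y = y - w.
      by rewrite /T1 {1}/cmx map_mxM /y mulmxA cI1 mulmxBl.
    have e2 : cmx T1 *m y = mu *: w.
      by rewrite /T1 {1}/cmx map_mxM -mulmxA hz' scalemxAr.
    have ey : y = (1 + mu) *: w.
      have : y - w = mu *: w by rewrite -e1 e2.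
      by move/eqP; rewrite subr_eq => /eqP ->; rewrite scalerDl scale1r addrC.
    have mu1 : 1 + mu != 0.
      by apply: contra y0 => /eqP h; rewrite ey h scale0r.
    have eT : eig T1 (mu / (1 + mu)).
      exists y; first exact: y0.
      by rewrite e2 ey scalerA divfK.
    have := le_lt_trans (rho_ub eT) rt.
    rewrite Normc.normcM Normc.normcV.
    have b0 : 0 < nc (1 + mu).
      rewrite lt_def normc_ge0 andbT; apply: contra mu1 => /eqP.
      by move/Normc.eq0_normc => ->.
    have b1 : nc (1 + mu) <= 1 + nc mu.
      by apply: le_trans (le_normcD _ _) _; rewrite Normc.normc1.
    rewrite ltr_pdivrMr // => h.
    have h2 : t * nc (1 + mu) <= t * (1 + nc mu) by rewrite ler_wpM2l // ltW.
    rewrite /g ltr_pdivlMr ?subr_gt0 //.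
    rewrite mulrDr mulr1 in h2; rewrite mulrBr mulr1; lra.
  have [w [w0 hw]] := core L0 rL.
  have wn : nnm w by move=> i j; rewrite ord1 ltW.
  pose x := Ad *m w; pose u := Ud *m w.
  have u0 : forall i, 0 < u i 0 := rowsum_pos Ud0 rs w0.
  have Tx : T1 *m x = x - u by rewrite /x mulmxA /T1 I1 mulmxBl.
  have Tx' : T1 *m x = Ud *m (L *m w) by rewrite /T1 /L /x !mulmxA.
  have ULw0 : forall i, 0 <= (Ud *m (L *m w)) i 0.
    by move=> i; exact: (nnm_mul Ud0 (nnm_mul L0 wn) i 0).
  have ex : x = u + Ud *m (L *m w) by rewrite -Tx' Tx addrC subrK.
  have xpos : forall i, 0 < x i 0.
    by move=> i; rewrite ex mxaddE; have := u0 i; have := ULw0 i; lra.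
  have hULw : forall i, (Ud *m (L *m w)) i 0 <= g * u i 0.
    move=> i; rewrite [(Ud *m _) i 0]mxE [u i 0]mxE mulr_sumr.
    apply: ler_sum => j _.
    by rewrite [g * _]mulrCA; apply: ler_wpM2l; [exact: Ud0 | exact: ltW (hw j)].
  have T1x : forall i, (T1 *m x) i 0 <= t * x i 0.
    move=> i; rewrite Tx' ex mxaddE.
    have h : (1 - t) * (Ud *m (L *m w)) i 0 <= (1 - t) * (g * u i 0).
      by rewrite ler_wpM2l // ?hULw // subr_ge0 ltW.
    rewrite mulrA hg mulrBl mul1r in h; rewrite mulrDr; lra.
  have Hx : forall i, ((T1 *m T2) *m x) i 0 <= (T1 *m x) i 0.
    have hT2 : T2 *m x = x - Md *m w by rewrite /T2 /x mulmxA I2 mulmxBl.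
    move=> i; rewrite -mulmxA hT2 mulmxBr mxsubE.
    have : 0 <= (T1 *m (Md *m w)) i 0 by exact: (nnm_mul T10 (nnm_mul Md0 wn) i 0).
    lra.
  apply: (@rho_le _ _ (T1 *m T2) t (ltW t0)) => l el.
  apply: (ub_eig (nnm_mul T10 T20) xpos _ el) => i.
  exact: le_trans (Hx i) (T1x i).
rewrite leNgt; apply/negP => lt.
have hm : spectral_radius T1 < Num.min (spectral_radius (T1 *m T2)) 1.
  by rewrite lt_min lt r1.
have m1 : Num.min (spectral_radius (T1 *m T2)) 1 <= spectral_radius (T1 *m T2).
  by rewrite ge_min lexx.
have m2 : Num.min (spectral_radius (T1 *m T2)) 1 <= 1 by rewrite ge_min lexx orbT.
move: key hm m1 m2 lt.
move: (spectral_radius T1) (spectral_radius (T1 *m T2)) (Num.min _ _) => a b c.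
clear; move=> key hm m1 m2 lt.
have := key ((a + c) / 2%:R); lra.
Qed.
End Main.

Unset Implicit Arguments.

Theorem theorem4p9 (R : realType) (m n : nat)
  (A M N U V : 'M[R]_(m, n)) (Adag Mdag Udag : 'M[R]_(n, m)) :
  is_MPinv A Adag -> mx_ge0 Adag ->
  proper_regular_splitting A M N Mdag ->
  proper_regular_splitting A U V Udag ->
  same_range (M + U - A) A -> same_null (M + U - A) A ->
  (forall i, 0 < \sum_j Udag i j) ->
  (forall i, 0 < \sum_j Mdag i j) ->
  let H := Udag *m V *m Mdag *m N in
  spectral_radius H <= Num.min (spectral_radius (Udag *m V)) (spectral_radius (Mdag *m N))
  /\ Num.min (spectral_radius (Udag *m V)) (spectral_radius (Mdag *m N)) < 1.
Proof.
move=> hA [Ad0 _] [psM hM [Md0 _] [N0 _]] [psU hU [Ud0 _] [V0 _]] _ _ rsU rsM H.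
have [r1 h1] := ML hA Ad0 psU hU Ud0 V0 rsU psM hM Md0 N0.
have [r2 h2] := ML hA Ad0 psM hM Md0 N0 rsM psU hU Ud0 V0.
have eH : H = Udag *m V *m (Mdag *m N) by rewrite /H !mulmxA.
have hs := swap_rho (Udag *m V) (Mdag *m N).
split.
  rewrite le_min eH; apply/andP; split => //; exact: le_trans hs h2.
by rewrite gt_min r1.
Qed.
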